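(* Let $R$ be an associative ring with identity $1$ and with an involution $*$, and let $p,q\in R$ be projections. Then the following statements are equivalent: (1) $1-pq$ is Moore–Penrose invertible; (2) $1-pqp$ is Moore–Penrose invertible; (3) $p-pqp$ is Moore–Penrose invertible; (4) $1-qp$ is Moore–Penrose invertible; (5) $1-qpq$ is Moore–Penrose invertible; (6) $q-qpq$ is Moore–Penrose invertible.
   Context: An involution on $R$ is a map $a\mapsto a^*$ with $(a^* )^*=a$, $(a+b)^*=a^*+b^*$, $(ab)^*=b^*a^*$. An element $a\in R$ is Moore–Penrose (MP) invertible if there exists $b\in R$ with $aba=a$, $bab=b$, $(ab)^*=ab$, $(ba)^*=ba$; such $b$ is unique and denoted $a^{\dagger}$. A projection is an element $p$ with $p^2=p=p^*$. *)

(* Defs.v *)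
From HB Require Import structures.
From mathcomp Require Import all_boot all_algebra.
Set Implicit Arguments. Unset Strict Implicit. Unset Printing Implicit Defensive.
Import GRing.Theory.
Local Open Scope ring_scope.

Definition involution (R : pzRingType) (star : R -> R) : Prop :=
  [/\ forall a, star (star a) = a,
      forall a b, star (a + b) = star a + star b &
      forall a b, star (a * b) = star b * star a].

Definition is_MP_inverse (R : pzRingType) (star : R -> R) (a b : R) : Prop :=
  [/\ a * b * a = a, b * a * b = b,
      star (a * b) = a * b & star (b * a) = b * a].

Definition MP_invertible (R : pzRingType) (star : R -> R) (a : R) : Prop :=
  exists b, is_MP_inverse star a b.

Definition projection (R : pzRingType) (star : R -> R) (p : R) : Prop :=
  p * p = p /\ star p = p.

(* Main.v *)
Require Import Defs.
From HB Require Import structures.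
From mathcomp Require Import all_boot all_algebra.
Import GRing.Theory.
Local Open Scope ring_scope.

Section S.
Variable (R : pzRingType) (star : R -> R).
Hypothesis Hs : involution star.

Lemma starK a : star (star a) = a. Proof. by case: Hs. Qed.
Lemma starD a b : star (a + b) = star a + star b. Proof. by case: Hs. Qed.
Lemma starM a b : star (a * b) = star b * star a. Proof. by case: Hs. Qed.
Lemma star0 : star 0 = 0.
Proof. apply: (addrI (star 0)); by rewrite -starD !addr0. Qed.
Lemma starN a : star (- a) = - star a.
Proof. apply: (addrI (star a)); by rewrite -starD !subrr star0. Qed.
Lemma starB a b : star (a - b) = star a - star b.
Proof. by rewrite starD starN. Qed.
Lemma star1 : star 1 = 1.
Proof. have := starM (star 1) 1; rewrite mulr1 !starK mulr1 => h; by rewrite -h. Qed.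

Lemma mp_star a b : is_MP_inverse star a b -> is_MP_inverse star (star a) (star b).
Proof.
case=> h1 h2 h3 h4; split.
- by rewrite -starM -starM mulrA h1.
- by rewrite -starM -starM mulrA h2.
- by rewrite -starM starK h4.
- by rewrite -starM starK h3.
Qed.

Lemma crit a x y : a = a * star a * x -> a = y * star a * a ->
  is_MP_inverse star a (star x * a * star y).
Proof.
move=> hx hy.
have sx : star a = star x * (a * star a).
  by rewrite {1}hx !starM starK mulrA.
have sy : star a = (star a * a) * star y.
  by rewrite {1}hy !starM starK mulrA.
have axa : a * star x * a = a.
  transitivity (a * star x * (a * star a * x)); first by rewrite -hx.
  transitivity (a * (star x * (a * star a)) * x); first by rewrite !mulrA.
  by rewrite -sx -hx.
have aya : a * star y * a = a.
  transitivity (y * star a * a * star y * a); first by rewrite -hy.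
  transitivity (y * ((star a * a) * star y) * a); first by rewrite !mulrA.
  by rewrite -sy -hy.
have ay : star (a * star y) = a * star y.
  have e : a * star y = y * star a.
    transitivity (y * star a * a * star y); first by rewrite -hy.
    transitivity (y * ((star a * a) * star y)); first by rewrite !mulrA.
    by rewrite -sy.
  by rewrite e starM starK.
have xa : star (star x * a) = star x * a.
  have e : star x * a = star a * x.
    transitivity (star x * (a * star a * x)); first by rewrite -hx.
    transitivity ((star x * (a * star a)) * x); first by rewrite !mulrA.
    by rewrite -sx.
  by rewrite e starM starK.
have ab : a * (star x * a * star y) = a * star y by rewrite !mulrA axa.
have ba : star x * a * star y * a = star x * a by rewrite -!mulrA [a * (star y * a)]mulrA aya.
split.
- by rewrite ab aya.
- rewrite ba; transitivity (star x * (a * star x * a) * star y); first by rewrite !mulrA.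
  by rewrite axa.
- by rewrite ab.
- by rewrite ba.
Qed.

Lemma comm_mp x b c : is_MP_inverse star x b -> c * x = x * c ->
  c * star x = star x * c -> c * b = b * c.
Proof.
case=> h1 h2 h3 h4 hc1 hc2.
have e2 : b = b * star b * star x.
  by rewrite -mulrA -starM h3 mulrA h2.
have e3 : b = star x * star b * b.
  by rewrite -starM h4 h2.
have e4 : star x = star x * x * b.
  by rewrite -{1}h1 starM h3 mulrA.
have e5 : star x = b * x * star x.
  by rewrite -{1}h1 -mulrA starM h4.
have E1 : b * c = b * x * c * b.
  transitivity (b * star b * star x * c); first by rewrite -e2.
  transitivity (b * star b * (c * star x)); first by rewrite hc2 !mulrA.
  transitivity (b * star b * (c * (star x * x * b))); first by rewrite -e4.
  transitivity (b * star b * ((c * star x) * x) * b); first by rewrite !mulrA.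
  transitivity (b * star b * (star x * (c * x)) * b); first by rewrite hc2 !mulrA.
  transitivity (b * star b * star x * (x * c) * b); first by rewrite hc1 !mulrA.
  by rewrite -e2 !mulrA.
have E2 : c * b = b * x * c * b.
  transitivity (c * (star x * star b * b)); first by rewrite -e3.
  transitivity ((star x * c) * star b * b); first by rewrite -hc2 !mulrA.
  transitivity ((b * x * star x) * c * star b * b); first by rewrite -e5.
  transitivity (b * x * (c * star x) * star b * b); first by rewrite hc2 !mulrA.
  transitivity (b * x * c * (star x * star b * b)); first by rewrite !mulrA.
  by rewrite -e3.
by rewrite E1 E2.
Qed.

Lemma sa_mp a X : star a = a -> a = a * star a * X -> MP_invertible star a.
Proof.
move=> sa hx; exists (star X * a * star (star X)); apply: crit => //.
have := congr1 star hx; rewrite !starM starK sa => e.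
by rewrite -mulrA -e.
Qed.

Lemma unit_row a r u v : v * u = 1 -> a = a * star a * r ->
  u * a = u * a * star (u * a) * (star v * r).
Proof.
move=> vu hr.
transitivity (u * a * star a * (star u * star v) * r).
  by rewrite -starM vu star1 mulr1 {1}hr !mulrA.
by rewrite starM !mulrA.
Qed.

Lemma mp_row a b : is_MP_inverse star a b -> a = a * star a * star b.
Proof. by case=> h1 _ _ h4; rewrite -mulrA -starM h4 mulrA h1. Qed.

Lemma sa_comm x b : star x = x -> is_MP_inverse star x b -> x * b = b * x.
Proof. by move=> sx hb; apply: (@comm_mp x b x hb) => //; rewrite sx. Qed.

Lemma jac a : MP_invertible star (1 - a * star a) -> MP_invertible star (1 - star a * a).
Proof.
case=> y hy.
have hS : star (1 - a * star a) = 1 - a * star a by rewrite starB star1 starM starK.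
move: hy hS; move Es : (1 - a * star a) => s hy hS.
have sy := @sa_comm s y hS hy.
case: hy => h1 h2 h3 h4.
have aas : a * star a = 1 - s by rewrite -Es opprB addrC subrK.
move Ef : (1 - y * s) => f.
have ys : y * s = 1 - f by rewrite -Ef opprB addrC subrK.
have sf : s * f = 0 by rewrite -Ef mulrBr mulr1 mulrA h1 subrr.
have fs : f * s = 0 by rewrite -Ef mulrBl mul1r -sy h1 subrr.
have fy : f * y = 0 by rewrite -Ef mulrBl mul1r h2 subrr.
have ff : f * f = f by rewrite -{2}Ef mulrBr mulr1 mulrA fy mul0r subr0.
have stf : star f = f by rewrite -Ef starB star1 h4.
have hf1 : a * star a * f = f by rewrite aas mulrBl mul1r sf subr0.
have hf2 : f * (a * star a) = f by rewrite aas mulrBr mulr1 fs subr0.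
move Eg : (star a * f * a) => g.
move Et : (1 - star a * a) => t.
have at_ : a * t = s * a by rewrite -Et -Es mulrBr mulr1 mulrBl mul1r mulrA.
have ta : t * star a = star a * s by rewrite -Et -Es mulrBr mulr1 mulrBl mul1r mulrA.
have tg : t * g = 0.
  rewrite -Eg -Et mulrBl mul1r.
  transitivity (star a * f * a - star a * (a * star a * f) * a); first by rewrite !mulrA.
  by rewrite hf1 subrr.
have gt : g * t = 0.
  rewrite -Eg -Et mulrBr mulr1.
  transitivity (star a * f * a - star a * (f * (a * star a)) * a); first by rewrite !mulrA.
  by rewrite hf2 subrr.
have gg : g * g = g.
  rewrite -Eg.
  transitivity (star a * (f * (a * star a)) * f * a); first by rewrite !mulrA.
  by rewrite hf2 -(mulrA _ f f) ff.
have gy : g * (star a * y * a) = 0.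
  rewrite -Eg.
  transitivity (star a * (f * (a * star a)) * y * a); first by rewrite !mulrA.
  by rewrite hf2 -(mulrA _ f y) fy mulr0 mul0r.
have sg : star g = g by rewrite -Eg !starM starK stf mulrA.
have saf : star a * (1 - f) * a = star a * a - g by rewrite -Eg mulrBr mulr1 mulrBl.
have E1 : (1 + star a * y * a - g) * t = 1 - g.
  rewrite mulrBl gt subr0 mulrDl mul1r -mulrA at_ !mulrA -(mulrA _ y s) ys saf.
  by rewrite -Et addrA subrK.
have E2 : t * (1 + star a * y * a - g) = 1 - g.
  rewrite mulrBr tg subr0 mulrDr mulr1 !mulrA ta -(mulrA _ s y) sy ys saf.
  by rewrite -Et addrA subrK.
exists (1 + star a * y * a - g); split.
- by rewrite E2 mulrBl mul1r gt subr0.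
- rewrite E1 mulrBl mul1r mulrBr mulrDr mulr1 gy addr0 gg subrr subr0.
  done.
- by rewrite E2 starB star1 sg.
- by rewrite E1 starB star1 sg.
Qed.

Lemma orth_mp e m b : e * e = e -> star e = e -> e * m = 0 -> m * e = 0 ->
  e * b = 0 -> b * e = 0 -> is_MP_inverse star m b ->
  MP_invertible star (e + m).
Proof.
move=> ee se em me eb be [h1 h2 h3 h4].
have E1 : (e + m) * (e + b) = e + m * b
  by rewrite mulrDl !mulrDr ee eb me !addr0 add0r.
have E2 : (e + b) * (e + m) = e + b * m
  by rewrite mulrDl !mulrDr ee em be !addr0 add0r.
exists (e + b); split.
- by rewrite E1 mulrDl !mulrDr ee em -mulrA be mulr0 h1 !addr0 add0r.
- by rewrite E2 mulrDl !mulrDr ee eb -mulrA me mulr0 h2 !addr0 add0r.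
- by rewrite E1 starD se h3.
- by rewrite E2 starD se h4.
Qed.

Lemma L23 p m : p * p = p -> star p = p -> star m = m -> p * m = m -> m * p = m ->
  MP_invertible star (1 - p + m) <-> MP_invertible star m.
Proof.
move=> pp sp sm pm mp.
have e2 : (1 - p) * (1 - p) = 1 - p by rewrite mulrBr mulr1 mulrBl mul1r pp subrr subr0.
have se : star (1 - p) = 1 - p by rewrite starB star1 sp.
have em : (1 - p) * m = 0 by rewrite mulrBl mul1r pm subrr.
have me : m * (1 - p) = 0 by rewrite mulrBr mulr1 mp subrr.
have px : p * (1 - p + m) = m by rewrite mulrDr mulrBr mulr1 pp subrr add0r pm.
have xp : (1 - p + m) * p = m by rewrite mulrDl mulrBl mul1r pp subrr add0r mp.
have sx : star (1 - p + m) = 1 - p + m by rewrite starD se sm.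
split.
- case=> y hy.
  have py : p * y = y * p.
    apply: (@comm_mp (1 - p + m) y p hy); first by rewrite px xp.
    by rewrite sx px xp.
  move: hy sx px xp; move: (1 - p + m) => x [h1 h2 h3 h4] sx px xp.
  have mb : m * (p * y) = p * (x * y) by rewrite mulrA mp -px mulrA.
  have mb2 : m * (p * y) = x * y * p by rewrite mulrA mp -xp -(mulrA x p y) py mulrA.
  have bm : p * y * m = p * (y * x) by rewrite py -(mulrA y p m) pm -px mulrA -py -mulrA.
  have bm2 : p * y * m = y * x * p by rewrite py -(mulrA y p m) pm -xp mulrA.
  exists (p * y); split.
  + rewrite mb; transitivity (p * (x * y) * (x * p)); first by rewrite xp.
    transitivity (p * (x * y * x) * p); first by rewrite !mulrA.
    by rewrite h1 px mp.
  + rewrite bm2; transitivity (y * x * (p * p) * y); first by rewrite !mulrA.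
    rewrite pp; transitivity (y * x * (y * p)); first by rewrite -py mulrA.
    by rewrite mulrA h2 py.
  + by rewrite mb2 starM sp h3 -mb mb2.
  + by rewrite bm starM h4 sp -bm2 bm.
- case=> b [h1 h2 h3 h4].
  have e1 : b = b * star b * m.
    by rewrite -sm -mulrA -starM h3 mulrA h2.
  have e2' : b = m * star b * b.
    by rewrite -{1}sm -starM h4 h2.
  have bp : b * p = b by rewrite {1}e1 -mulrA mp -e1.
  have pb : p * b = b by rewrite {1}e2' !mulrA pm -e2'.
  apply: (@orth_mp (1 - p) m b) => //.
  + by rewrite mulrBl mul1r pb subrr.
  + by rewrite mulrBr mulr1 bp subrr.
Qed.

Lemma MP_star a : MP_invertible star a -> MP_invertible star (star a).
Proof. by case=> b hb; exists (star b); apply: mp_star. Qed.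

Lemma unitsq (t : R) : t * t = 0 -> (1 + t) * (1 - t) = 1 /\ (1 - t) * (1 + t) = 1.
Proof.
move=> tt; split.
- by rewrite mulrBr mulr1 mulrDl mul1r tt addr0 addrK.
- by rewrite mulrDr mulr1 mulrBl mul1r tt subr0 subrK.
Qed.

Lemma row_to_col a r : star a = star a * star (star a) * r -> a = star r * star a * a.
Proof. by move/(congr1 star); rewrite !starM !starK mulrA. Qed.
Arguments row_to_col {a r}.
Arguments unitsq {t}.
Arguments unit_row {a r u v}.
Arguments mp_row {a b}.
Arguments sa_mp {a X}.
Arguments crit {a x y}.

Section P.
Variables p q : R.
Hypotheses (pp : p * p = p) (sp : star p = p) (qq : q * q = q) (sq : star q = q).

Lemma sw : star (1 - p * q * p) = 1 - p * q * p.
Proof. by rewrite starB star1 !starM sp sq mulrA. Qed.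

Lemma tt1 : p * q * (1 - p) * (p * q * (1 - p)) = 0.
Proof.
transitivity (p * q * ((1 - p) * p) * q * (1 - p)); first by rewrite !mulrA.
by rewrite mulrBl mul1r pp subrr mulr0 !mul0r.
Qed.

Lemma ew : (1 + p * q * (1 - p)) * (1 - p * q) = 1 - p * q * p.
Proof.
have z : p * q * (1 - p) * (p * q) = 0.
  transitivity (p * q * ((1 - p) * p) * q); first by rewrite !mulrA.
  by rewrite mulrBl mul1r pp subrr mulr0 !mul0r.
rewrite mulrBr mulr1 mulrDl mul1r z addr0 mulrBr mulr1.
by rewrite addrA addrAC addrK.
Qed.

Lemma tt2 : (1 - q) * p * q * ((1 - q) * p * q) = 0.
Proof.
transitivity ((1 - q) * p * (q * (1 - q)) * p * q); first by rewrite !mulrA.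
by rewrite mulrBr mulr1 qq subrr mulr0 !mul0r.
Qed.

Lemma ew2 : (1 - p * q) * (1 + (1 - q) * p * q) = 1 - q * p * q.
Proof.
have z : p * q * ((1 - q) * p * q) = 0.
  transitivity (p * (q * (1 - q)) * p * q); first by rewrite !mulrA.
  by rewrite mulrBr mulr1 qq subrr mulr0 !mul0r.
rewrite mulrBl mul1r mulrDr mulr1 z addr0 -!mulrA mulrBl mul1r !mulrA.
by rewrite addrA addrAC addrK.
Qed.

Lemma L12 : MP_invertible star (1 - p * q) -> MP_invertible star (1 - p * q * p).
Proof.
case=> b hb.
have [u1 u2] := unitsq tt1.
have := unit_row u2 (mp_row hb); rewrite ew => h.
exact: sa_mp sw h.
Qed.

Lemma Lback : MP_invertible star (1 - p * q * p) -> MP_invertible star (1 - q * p * q) ->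
  MP_invertible star (1 - p * q).
Proof.
case=> y hy [z hz].
have [u1 u2] := unitsq tt1.
have ex : 1 - p * q = (1 - p * q * (1 - p)) * (1 - p * q * p).
  by rewrite -ew mulrA u2 mul1r.
have h1 := unit_row u1 (mp_row hy); rewrite -ex in h1.
have [v1 v2] := unitsq tt2.
have ex2 : 1 - p * q = (1 - q * p * q) * (1 - (1 - q) * p * q).
  transitivity ((1 - p * q) * ((1 + (1 - q) * p * q) * (1 - (1 - q) * p * q))).
    have v1' : (1 + (1 - q) * p * q) * (1 - (1 - q) * p * q) = 1 by exact: v1.
    by rewrite v1' mulr1.
  by rewrite mulrA ew2.
have sw2 : star (1 - q * p * q) = 1 - q * p * q by rewrite starB star1 !starM sp sq mulrA.
have vv : star (1 + (1 - q) * p * q) * star (1 - (1 - q) * p * q) = 1.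
  by rewrite -starM v2 star1.
have hxs : star (1 - p * q) = star (1 - (1 - q) * p * q) * (1 - q * p * q).
  by rewrite {1}ex2 starM sw2.
have := unit_row vv (mp_row hz); rewrite -hxs => h2.
have h3 := row_to_col h2.
eexists; exact: (crit h1 h3).
Qed.

Lemma L23' : MP_invertible star (1 - p * q * p) <-> MP_invertible star (p - p * q * p).
Proof.
have e : 1 - p + (p - p * q * p) = 1 - p * q * p by rewrite addrA subrK.
rewrite -e; apply: L23 => //.
- by rewrite starB !starM sp sq mulrA.
- by rewrite mulrBr pp !mulrA pp.
- by rewrite mulrBl pp -!mulrA pp.
Qed.

Lemma J1 : MP_invertible star (1 - p * q * p) -> MP_invertible star (1 - q * p * q).
Proof.
move=> h.
have e1 : 1 - p * q * star (p * q) = 1 - p * q * p by rewrite starM sp sq mulrA -(mulrA p q q) qq.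
have e2 : 1 - star (p * q) * (p * q) = 1 - q * p * q by rewrite starM sp sq mulrA -(mulrA q p p) pp.
have := @jac (p * q); rewrite e1 e2; exact.
Qed.

Lemma Lst : MP_invertible star (1 - p * q) -> MP_invertible star (1 - q * p).
Proof.
move/MP_star; by rewrite starB star1 starM sp sq.
Qed.
End P.
End S.

Theorem theorem2p4 (R : pzRingType) (star : R -> R) (p q : R) :
  involution star -> projection star p -> projection star q ->
  [<-> MP_invertible star (1 - p * q);
       MP_invertible star (1 - p * q * p);
       MP_invertible star (p - p * q * p);
       MP_invertible star (1 - q * p);
       MP_invertible star (1 - q * p * q);
       MP_invertible star (q - q * p * q)].
Proof.
move=> Hs [pp sp] [qq sq].
have A1 : MP_invertible star (1 - p * q) -> MP_invertible star (1 - p * q * p) by apply: L12.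
have B1 : MP_invertible star (1 - p * q * p) <-> MP_invertible star (p - p * q * p) by apply: L23'.
have C1 : MP_invertible star (1 - p * q * p) -> MP_invertible star (1 - q * p * q) by apply: J1.
have D1 : MP_invertible star (1 - p * q * p) -> MP_invertible star (1 - q * p * q) -> MP_invertible star (1 - p * q) by apply: Lback.
have E1 : MP_invertible star (1 - p * q) -> MP_invertible star (1 - q * p) by apply: Lst.
have A2 : MP_invertible star (1 - q * p) -> MP_invertible star (1 - q * p * q) by apply: L12.
have B2 : MP_invertible star (1 - q * p * q) <-> MP_invertible star (q - q * p * q) by apply: L23'.
have C2 : MP_invertible star (1 - q * p * q) -> MP_invertible star (1 - p * q * p) by apply: J1.
have D2 : MP_invertible star (1 - q * p * q) -> MP_invertible star (1 - p * q * p) -> MP_invertible star (1 - q * p) by apply: Lback.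
have E2 : MP_invertible star (1 - q * p) -> MP_invertible star (1 - p * q) by apply: Lst.
tfae.
- exact: A1.
- exact: B1.1.
- by move/B1.2=> h; apply: E1; apply: D1 h (C1 h).
- exact: A2.
- exact: B2.1.
- by move/B2.2=> h; apply: E2; apply: D2 h (C2 h).
Qed.
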